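(* Let $w$ be an infinite word on an alphabet $\mathcal{A}$ having infinitely many palindromic prefixes, and let $(n_i)_{i\ge1}$ be the increasing sequence of the lengths of its palindromic prefixes ($n_1=0$). The following are equivalent: (i) $n_{i+1}\le 2n_i+1$ for all $i\ge1$; (ii) there is an admissible function $\psi$ such that $w=w_\psi$.
   Context: The alphabet $\mathcal{A}$ (finite or infinite) is disjoint from $\mathbb{N}^*=\{1,2,\dots\}$; the empty word $\varepsilon$ is a palindrome. An admissible function is a map $\psi:\mathbb{N}^*\to\mathbb{N}^*\sqcup\mathcal{A}$ such that for every $n\ge1$ either $\psi(n)\in\mathcal{A}$ or $1\le\psi(n)\le n-1$. With it associate finite words $\pi_1=\varepsilon$ and, for $i\ge1$: if $\psi(i)\in\mathcal{A}$, $\pi_{i+1}=\pi_i\,\psi(i)\,\pi_i$; if $\psi(i)\in\mathbb{N}^*$, then $\pi_{\psi(i)}$ is a prefix of $\pi_i$, and writing $\pi_i=\pi_{\psi(i)}b_i$ one sets $\pi_{i+1}=\pi_i b_i$ (denoted $\pi_i\pi_{\psi(i)}^{-1}\pi_i$). Each $\pi_i$ is a palindrome and a proper prefix of $\pi_{i+1}$; $w_\psi$ denotes the infinite word having every $\pi_i$ as a prefix. *)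

(* Defs.v *)
From mathcomp Require Import all_boot.
Set Implicit Arguments. Unset Strict Implicit. Unset Printing Implicit Defensive.

(* Finite words are [seq A]; infinite words are [nat -> A] (letters indexed from 0). *)

Definition palindrome {A : Type} (s : seq A) : Prop := s = rev s.

Definition wprefix {A : Type} (w : nat -> A) (m : nat) : seq A := mkseq w m.

Definition pal_prefix_len {A : Type} (w : nat -> A) (m : nat) : Prop :=
  palindrome (wprefix w m).

(* psi : N* -> N* ⊔ A is modelled as nat -> nat + A; the value at 0 is irrelevant.
   inl k stands for k ∈ N*, inr a for a ∈ A. *)
Definition admissible {A : Type} (psi : nat -> nat + A) : Prop :=
  forall n, 1 <= n ->
    match psi n with
    | inl k => is_true (1 <= k <= n.-1)
    | inr _ => True
    end.

(* pis psi n = [:: π_1; π_2; ...; π_{n+1}] *)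
Fixpoint pis {A : Type} (psi : nat -> nat + A) (n : nat) : seq (seq A) :=
  match n with
  | 0 => [:: [::]]
  | n'.+1 =>
      let l := pis psi n' in
      let p := last [::] l in            (* π_i with i = n'+1 *)
      let next :=
        match psi n'.+1 with
        | inr a => p ++ a :: p
        | inl k => p ++ drop (size (nth [::] l k.-1)) p
                                          (* π_i π_{ψ(i)}^{-1} π_i *)
        end in
      rcons l next
  end.

(* π_i for i >= 1 (pi psi 0 = π_1 as junk value). *)
Definition pi {A : Type} (psi : nat -> nat + A) (i : nat) : seq A :=
  last [::] (pis psi i.-1).

Definition is_w_psi {A : Type} (psi : nat -> nat + A) (w : nat -> A) : Prop :=
  forall i, 1 <= i -> pi psi i = wprefix w (size (pi psi i)).

(* Main.v *)
Require Import Defs.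
From mathcomp Require Import all_boot zify.

Set Implicit Arguments. Unset Strict Implicit.
Local Notation pi := Defs.pi.
Section S.
Variable A : Type.

Lemma pal_iff (w : nat -> A) m :
  pal_prefix_len w m <-> (forall j, j < m -> w j = w (m.-1 - j)).
Proof.
rewrite /pal_prefix_len /palindrome /wprefix; split.
- move=> H j hj.
  have := congr1 (fun s => nth (w 0) s j) H => /=.
  rewrite nth_rev ?size_mkseq // !nth_mkseq //; last by lia.
  by have -> : m - j.+1 = m.-1 - j by lia.
- move=> H; apply: (@eq_from_nth _ (w 0)); first by rewrite size_rev.
  move=> j; rewrite size_mkseq => hj.
  rewrite nth_rev ?size_mkseq // !nth_mkseq //; last by lia.
  have -> : m - j.+1 = m.-1 - j by lia. by apply: H.
Qed.

Lemma size_pis (psi : nat -> nat + A) m : size (pis psi m) = m.+1.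
Proof. by elim: m => //= m IH; rewrite size_rcons IH. Qed.

Lemma nth_pis (psi : nat -> nat + A) m j : j <= m -> nth [::] (pis psi m) j = pi psi j.+1.
Proof.
elim: m j => [|m IH] j hj.
  by case: j hj.
rewrite /= nth_rcons size_pis.
case: ltnP => h1; first by rewrite IH.
have -> : j = m.+1 by lia.
by rewrite eqxx /pi /= last_rcons.
Qed.

Lemma pi_step_inr (psi : nat -> nat + A) i a : 1 <= i -> psi i = inr a ->
  pi psi i.+1 = pi psi i ++ a :: pi psi i.
Proof.
case: i => // m _ H.
by rewrite {1}/pi /= H last_rcons.
Qed.

Lemma pi_step_inl (psi : nat -> nat + A) i k : 1 <= i -> psi i = inl k -> k <= i ->
  pi psi i.+1 = pi psi i ++ drop (size (pi psi k)) (pi psi i).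
Proof.
case: i => // m _ H hk.
rewrite {1}/pi /= H last_rcons nth_pis; last by lia.
case: k H hk => //.
Qed.

Lemma take_mkseq' (w : nat -> A) a b : a <= b -> take a (mkseq w b) = mkseq w a.
Proof.
move=> hab; apply: (@eq_from_nth _ (w 0)).
  by rewrite size_takel ?size_mkseq.
move=> j; rewrite size_takel ?size_mkseq // => hja.
by rewrite nth_take // !nth_mkseq //; lia.
Qed.

Section Dir2.
Variable psi : nat -> nat + A.
Variable w : nat -> A.
Hypothesis Hadm : admissible psi.
Hypothesis Hw : is_w_psi psi w.

Lemma L_mono i : 1 <= i -> forall k, 1 <= k < i -> size (pi psi k) < size (pi psi i).
Proof.
elim: i => // i IH hi k hk.
have hi1 : 1 <= i by lia.
have IH' := IH hi1.
have Hstep : size (pi psi i) < size (pi psi i.+1).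
  have := Hadm hi1; case E: (psi i) => [k'|a] hk'.
  - rewrite (pi_step_inl hi1 E); last by lia.
    rewrite size_cat size_drop.
    have h : size (pi psi k') < size (pi psi i) by apply: IH'; lia.
    lia.
  - by rewrite (pi_step_inr hi1 E) size_cat /=; lia.
case: (ltnP k i) => hki.
  have h : size (pi psi k) < size (pi psi i) by apply: IH'; lia.
  lia.
have -> : k = i by lia.
done.
Qed.

Lemma L_step i : 1 <= i -> size (pi psi i) < size (pi psi i.+1) <= (size (pi psi i)).*2.+1.
Proof.
move=> hi1.
have := Hadm hi1; case E: (psi i) => [k'|a] hk'.
- rewrite (pi_step_inl hi1 E); last by lia.
  rewrite size_cat size_drop.
  have h : size (pi psi k') < size (pi psi i) by apply: L_mono; lia.
  lia.
- by rewrite (pi_step_inr hi1 E) size_cat /=; lia.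
Qed.

Lemma pal_pi_aux i : forall j, 1 <= j <= i -> palindrome (pi psi j).
Proof.
elim: i => [|i IH] j hj; first lia.
case: (ltnP j i.+1) => hji; first by apply IH; lia.
have -> : j = i.+1 by lia.
case: (posnP i) => [->|hi1]; first by [].
have Hp : palindrome (pi psi i) by apply: IH; lia.
have := Hadm hi1; case E: (psi i) => [k|a] hk.
- rewrite (pi_step_inl hi1 E); last by lia.
  have Hk : palindrome (pi psi k) by apply: IH; lia.
  have hlt : size (pi psi k) < size (pi psi i) by apply: L_mono; lia.
  have Hpre : take (size (pi psi k)) (pi psi i) = pi psi k.
    have e1 := Hw hi1.
    have e2 : pi psi k = wprefix w (size (pi psi k)) by apply: Hw; lia.
    rewrite {2}e2 {1}e1 /wprefix take_mkseq' //; lia.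
  set p := pi psi i in Hp Hpre hlt *; set pk := pi psi k in Hk Hpre hlt *.
  set b := drop (size pk) p.
  have Hpb : p = pk ++ b by rewrite -{1}(cat_take_drop (size pk) p) Hpre.
  have Hr : p = rev b ++ pk by rewrite {1}Hp Hpb rev_cat -Hk.
  rewrite /palindrome rev_cat -Hp {2}Hpb catA -Hr. done.
- rewrite (pi_step_inr hi1 E) /palindrome rev_cat rev_cons -Hp cat_rcons.
  done.
Qed.

Lemma pal_pi i : 1 <= i -> palindrome (pi psi i).
Proof. move=> hi; apply: (@pal_pi_aux i); lia. Qed.

Lemma pal_len i : 1 <= i -> pal_prefix_len w (size (pi psi i)).
Proof. move=> hi; rewrite /pal_prefix_len -(Hw hi); exact: pal_pi. Qed.

Lemma bracket x : exists i, 1 <= i /\ size (pi psi i) <= x < size (pi psi i.+1).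
Proof.
elim: x => [|x [i [hi /andP [h1 h2]]]].
  exists 1; split => //; have := L_step (i := 1); rewrite /pi /=; lia.
case: (ltnP x.+1 (size (pi psi i.+1))) => h3.
  by exists i; split => //; lia.
exists i.+1; split => //; have := L_step (i := i.+1); lia.
Qed.
End Dir2.

Section Nseq.
Variable w : nat -> A.
Variable n : nat -> nat.
Hypothesis Hn_incr : forall i, 1 <= i -> n i < n i.+1.
Hypothesis Hn_enum : forall m, pal_prefix_len w m <-> exists i, 1 <= i /\ n i = m.

Lemma n_le a b : 1 <= a -> a <= b -> n a <= n b.
Proof.
move=> ha; elim: b => [|b IH] hab; first lia.
case: (ltnP a b.+1) => h.
  have := IH ltac:(lia); have := Hn_incr (i := b) ltac:(lia); lia.
have -> : a = b.+1 by lia.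
done.
Qed.

Lemma n_lt a b : 1 <= a -> a < b -> n a < n b.
Proof.
move=> ha hab; have := n_le (a := a.+1) (b := b) ltac:(lia) hab.
have := Hn_incr ha; lia.
Qed.

Lemma n1 : n 1 = 0.
Proof.
have [i [hi e]] : exists i, 1 <= i /\ n i = 0 by apply/Hn_enum; rewrite pal_iff.
case: (ltnP 1 i) => h; first by have := n_lt (a := 1) (b := i) (erefl _) h; lia.
by have <- : i = 1 by lia.
Qed.

Definition mkpsi (j : nat) : nat + A :=
  if n j.+1 == (n j).*2.+1 then inr (w (n j))
  else let d := (n j).*2 - n j.+1 in
       let s := iota 1 j.-1 in
       inl (nth 0 s (find (fun x => n x == d) s)).

Hypothesis Hcond : forall i, 1 <= i -> n i.+1 <= (n i).*2.+1.

Lemma inl_case j : 1 <= j -> n j.+1 != (n j).*2.+1 ->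
  let k := nth 0 (iota 1 j.-1) (find (fun x => n x == (n j).*2 - n j.+1) (iota 1 j.-1)) in
  1 <= k <= j.-1 /\ n k = (n j).*2 - n j.+1.
Proof.
move=> hj hne k.
set m := n j; set N := n j.+1; set d := m.*2 - N.
have hmN : m < N by apply: Hn_incr.
have hN : N <= m.*2 by have := Hcond hj; move: hne => /eqP; rewrite -/m -/N; lia.
have Hu : forall t, t < N -> w t = w (N.-1 - t).
  by apply/pal_iff/Hn_enum; exists j.+1.
have Hp : forall t, t < m -> w t = w (m.-1 - t).
  by apply/pal_iff/Hn_enum; exists j.
have Hd : pal_prefix_len w d.
  apply/pal_iff => t ht.
  transitivity (w (m.-1 - t)); first by apply: Hp; lia.
  rewrite (Hu (m.-1 - t)); last by lia.
  rewrite (Hp (N.-1 - (m.-1 - t))); last by lia.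
  f_equal; lia.
have [i0 [hi0 e0]] := (proj1 (Hn_enum d)) Hd.
have hi0j : i0 < j.
  case: (ltnP i0 j) => // h; have := n_le hj h; rewrite e0 -/m; lia.
have Hhas : has (fun x => n x == d) (iota 1 j.-1).
  apply/hasP; exists i0; last by apply/eqP.
  rewrite mem_iota; lia.
have := nth_find 0 Hhas; rewrite -/k => /eqP ->; split => //.
have : k \in iota 1 j.-1 by apply: mem_nth; rewrite -has_find.
rewrite mem_iota; lia.
Qed.

Lemma adm_mkpsi : admissible mkpsi.
Proof.
move=> j hj; rewrite /mkpsi; case: ifP => // /negbT hne.
by have [h _] := inl_case hj hne.
Qed.

Lemma main_pref i : forall j, 1 <= j <= i -> pi mkpsi j = wprefix w (n j).
Proof.
elim: i => [|i IH] j hj; first lia.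
case: (ltnP j i.+1) => hji; first by apply IH; lia.
have -> : j = i.+1 by lia.
clear hj hji j.
case: (posnP i) => [->|hi1]; first by rewrite n1.
have Hpi : pi mkpsi i = wprefix w (n i) by apply: IH; lia.
set m := n i; set N := n i.+1.
have hmN : m < N by apply: Hn_incr.
have Hu : forall t, t < N -> w t = w (N.-1 - t).
  by apply/pal_iff/Hn_enum; exists i.+1.
have Hp : forall t, t < m -> w t = w (m.-1 - t).
  by apply/pal_iff/Hn_enum; exists i.
case: (boolP (N == m.*2.+1)) => hc.
- have E : mkpsi i = inr (w m) by rewrite /mkpsi hc.
  rewrite (pi_step_inr hi1 E) Hpi /wprefix.
  apply: (@eq_from_nth _ (w 0)); first by rewrite size_cat /= !size_mkseq; move/eqP: hc; lia.
  move=> j; rewrite size_cat /= !size_mkseq => hj.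
  rewrite nth_cat size_mkseq; case: ltnP => h1.
    by rewrite !nth_mkseq //; lia.
  rewrite nth_mkseq; last by move/eqP: hc; lia.
  case E2: (j - m) => [|t] /=; first by f_equal; lia.
  rewrite nth_mkseq; last by lia.
  rewrite (Hu j); last by move/eqP: hc; lia.
  rewrite (Hp (N.-1 - j)); last by move/eqP: hc; lia.
  f_equal; move/eqP: hc; lia.
- have [hk ek] := inl_case hi1 hc.
  set k := nth _ _ _ in hk ek.
  have E : mkpsi i = inl k by rewrite /mkpsi (negbTE hc).
  rewrite (pi_step_inl hi1 E); last by lia.
  have Hpk : pi mkpsi k = wprefix w (n k) by apply: IH; lia.
  have hN : N <= m.*2 by have := Hcond hi1; move: hc => /eqP; rewrite -/m -/N; lia.
  rewrite Hpk Hpi /wprefix size_mkseq ek.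
  apply: (@eq_from_nth _ (w 0)); first by rewrite size_cat size_drop !size_mkseq; lia.
  move=> j; rewrite size_cat size_drop !size_mkseq => hj.
  rewrite nth_cat size_mkseq; case: ltnP => h1.
    by rewrite !nth_mkseq //; lia.
  rewrite nth_drop !nth_mkseq; [|lia|lia].
  rewrite (Hu j); last by lia.
  rewrite (Hp (N.-1 - j)); last by lia.
  f_equal; lia.
Qed.
End Nseq.
End S.

Theorem theorem4p2 (A : Type) (w : nat -> A)
  (Hinf : forall m, exists k, m <= k /\ pal_prefix_len w k)
  (n : nat -> nat)
  (Hn_incr : forall i, 1 <= i -> n i < n i.+1)
  (Hn_enum : forall m, pal_prefix_len w m <-> exists i, 1 <= i /\ n i = m) :
  (forall i, 1 <= i -> n i.+1 <= (n i).*2.+1) <->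
  (exists psi : nat -> nat + A, admissible psi /\ is_w_psi psi w).
Proof.
split.
- move=> Hcond; exists (mkpsi w n); split; first exact: adm_mkpsi.
  move=> i hi.
  have e := main_pref Hn_incr Hn_enum Hcond (i := i) (j := i) ltac:(lia).
  by rewrite e /wprefix size_mkseq.
- move=> [psi [Hadm Hw]] i hi.
  have [i0 [hi0 /andP [h1 h2]]] := bracket Hadm (n i).
  have [m [hm em]] := proj1 (Hn_enum _) (pal_len Hadm Hw (i := i0.+1) ltac:(lia)).
  have hmi : i < m.
    case: (ltnP i m) => // h; have := n_le Hn_incr hm h; lia.
  have := n_le Hn_incr (a := i.+1) (b := m) ltac:(lia) hmi.
  have := L_step Hadm (i := i0) hi0.
  lia.
Qed.
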